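(* Let $n\ge2$, $k>0$, let $v\in\mathbb{S}^n(1/k)\subset\mathbb{R}^{n+1}$, and let $G$ be the isotropy subgroup of $\operatorname{Iso}(\mathbb{S}^n(1/k))$ at $v$. Let $X\in C^\infty(T\mathbb{S}^n(1/k))$ satisfy $X_G\equiv 0$. Then the function $f(p)=\langle X(p),v\rangle$ (Euclidean inner product in $\mathbb{R}^{n+1}$, with $X(p)$ regarded as a vector of $\mathbb{R}^{n+1}$) satisfies $\int_{\mathbb{S}^n(1/k)}f(x)\,dx=0$.
   Context: The groups are given left-invariant metrics induced from a fixed left-invariant metric on $\operatorname{Iso}(\mathbb{S}^n(1/k))$, with volume measure $dg$. The $G$-mean $X_G$ of a vector field $X$ is defined by $\langle X_G(p),u\rangle=\frac{1}{\operatorname{Vol}(G)}\int_G\langle (dg_p)^{-1}X(g(p)),u\rangle\,dg$ for $u\in T_p\mathbb{S}^n(1/k)$. *)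

(* Defs.v *)
From HB Require Import structures.
From mathcomp Require Import all_boot all_order all_algebra.
From mathcomp Require Import all_classical all_reals all_analysis.
Set Implicit Arguments. Unset Strict Implicit. Unset Printing Implicit Defensive.
Import Order.TTheory GRing.Theory Num.Theory.
Import numFieldNormedType.Exports.
Local Open Scope classical_set_scope.
Local Open Scope ring_scope.

Section Defs.
Variable R : realType.

Definition dot m (x y : 'rV[R]_m) : R := (x *m y^T) 0 0.

Definition sphere m (r : R) : set 'rV[R]_m := [set x | dot x x = r ^+ 2].
Arguments sphere m r : clear implicits.

(* orthogonal matrices; the isometry group of the sphere, acting by x |-> x *m g *)
Definition orthogonal m (g : 'M[R]_m) : Prop := g *m g^T = 1%:M.

Definition isotropy m (v : 'rV[R]_m) : set 'M[R]_m :=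
  [set g | orthogonal g /\ v *m g = v].

Definition tangent m (p : 'rV[R]_m) : set 'rV[R]_m := [set u | dot u p = 0].

Fixpoint iter_derive m (dirs : seq 'rV[R]_m) (f : 'rV[R]_m -> 'rV[R]_m)
  : 'rV[R]_m -> 'rV[R]_m :=
  match dirs with
  | [::] => f
  | d :: ds => fun x => derive (iter_derive ds f) x d
  end.

Definition smooth m (f : 'rV[R]_m -> 'rV[R]_m) : Prop :=
  forall (dirs : seq 'rV[R]_m) (x : 'rV[R]_m),
    differentiable (iter_derive dirs f) x.

Definition borelM m : Type := g_sigma_algebraType (@open 'M[R]_m).
Definition borelV m : Type := g_sigma_algebraType (@open 'rV[R]_m).

Definition haar_prob m (v : 'rV[R]_m)
  (mu : probability (borelM m) R) : Prop :=
  mu (~` isotropy v) = 0%E /\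
  forall g : 'M[R]_m, isotropy v g ->
    forall A : set (borelM m), measurable A ->
      mu ((fun h : 'M[R]_m => g *m h) @^-1` A) = mu A.

(* a nonzero finite O(m)-invariant Borel measure carried by the sphere:
   a positive multiple of the Riemannian volume measure of the sphere *)
Definition sphere_measure m (r : R)
  (sigma : {finite_measure set (borelV m) -> \bar R}) : Prop :=
  sigma (~` @sphere m r) = 0%E /\ (0 < sigma setT)%E /\
  forall g : 'M[R]_m, orthogonal g ->
    forall A : set (borelV m), measurable A ->
      sigma ((fun x : 'rV[R]_m => x *m g) @^-1` A) = sigma A.

(* X_G == 0 : the G-mean of X vanishes at every point of the sphere *)
Definition G_mean_zero m (r : R) (v : 'rV[R]_m)
  (mu : probability (borelM m) R) (X : 'rV[R]_m -> 'rV[R]_m) : Prop :=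
  forall p : 'rV[R]_m, sphere m r p ->
    forall u : 'rV[R]_m, tangent p u ->
      (\int[mu]_(g in (isotropy v : set (borelM m)))
          (dot (X (p *m g) *m g^T) u)%:E = 0)%E.

End Defs.
Arguments sphere {R} m r.

(* Main.v *)
Require Import Defs.
From HB Require Import structures.
From mathcomp Require Import all_boot all_order all_algebra.
From mathcomp Require Import all_classical all_reals all_analysis.
From mathcomp Require Import measurable_realfun.
From mathcomp Require Import lra.
Import Order.TTheory GRing.Theory Num.Theory.
Import numFieldNormedType.Exports.
Local Open Scope classical_set_scope.
Local Open Scope ring_scope.

Lemma mx_ballE (R : realType) m n (x y : 'M[R]_(m,n)) e :
  ball x e y <-> 0 < e /\ forall i j, `|x i j - y i j| < e.
Proof. by []. Qed.

Lemma mx_cont (R : realType) (T : topologicalType) a b (h : T -> 'M[R]_(a,b)) :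
  (forall i j, continuous (fun t => h t i j)) -> continuous h.
Proof.
move=> hc t; apply/cvg_ballP => e e0.
have : \forall s \near t, forall ij : 'I_a * 'I_b,
    ball (h t ij.1 ij.2) e (h s ij.1 ij.2).
  by apply: filter_forall => -[i j]; exact: (cvg_ball (hc i j t)).
by apply: filterS => s H; split => // i j; exact: (H (i, j)).
Qed.

Lemma sum_cont (R : realType) (T : topologicalType) (I : finType)
  (F : I -> T -> R) : (forall i, continuous (F i)) ->
  continuous (fun t => \sum_i F i t).
Proof.
move=> Fc.
suff H : forall s : seq I, continuous (fun t => \sum_(i <- s) F i t).
  exact: H.
elim => [|i s IH].
  under eq_fun do rewrite big_nil; exact: cst_continuous.
under eq_fun do rewrite big_cons.
by move=> x; apply: continuousD; [exact: Fc|exact: IH].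
Qed.

Lemma comp_cont {S T U : topologicalType} (f : S -> T) (g : T -> U) :
  continuous f -> continuous g -> continuous (fun x => g (f x)).
Proof. by move=> cf cg x; apply: continuous_comp; [exact: cf|exact: cg]. Qed.

Lemma coord_cont (R : realType) (T : topologicalType) a b
  (F : T -> 'M[R]_(a,b)) i j : continuous F -> continuous (fun t => F t i j).
Proof. move=> cF x; apply: (@continuous_comp _ _ _ F (fun M : 'M[R]_(a,b) => M i j) x); [exact: cF|exact: coord_continuous]. Qed.

Lemma mulmx_cont (R : realType) (T : topologicalType) a b c
  (F : T -> 'M[R]_(a,b)) (G : T -> 'M[R]_(b,c)) :
  continuous F -> continuous G -> continuous (fun t => F t *m G t).
Proof.
move=> cF cG; apply: mx_cont => i j.
under eq_fun do rewrite mxE.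
apply: sum_cont => k x; apply: continuousM.
  exact: coord_cont.
exact: coord_cont.
Qed.

Lemma trmx_cont (R : realType) (T : topologicalType) a b
  (F : T -> 'M[R]_(a,b)) : continuous F -> continuous (fun t => (F t)^T).
Proof.
move=> cF; apply: mx_cont => i j; under eq_fun do rewrite mxE.
exact: coord_cont.
Qed.

Lemma fst_cont {T U : topologicalType} : continuous (@fst T U).
Proof. by move=> [x y]; exact: cvg_fst. Qed.

Lemma snd_cont {T U : topologicalType} : continuous (@snd T U).
Proof. by move=> [x y]; exact: cvg_snd. Qed.
Lemma meas_cont (R : realType) (T : ptopologicalType) (phi : T -> R) :
  continuous phi ->
  measurable_fun setT (phi : g_sigma_algebraType (@open T) -> R).
Proof.
move=> /continuousP cf; apply: (measurability _ (RGenOpens.measurableE R)).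
move=> _ [_ [a [b ->] <-]]; rewrite setTI.
apply: sub_gen_smallest; exact/cf/interval_open.
Qed.

Lemma meas_cont_gen (T U : ptopologicalType) (phi : T -> U) :
  continuous phi ->
  measurable_fun setT (phi : g_sigma_algebraType (@open T) ->
                             g_sigma_algebraType (@open U)).
Proof.
move=> /continuousP cf; apply: (@measurability _ _ (g_sigma_algebraType (@open T)) (g_sigma_algebraType (@open U)) setT phi (@open U)) => //.
move=> _ [B oB <-]; rewrite setTI.
apply: sub_gen_smallest; exact/cf.
Qed.

Lemma borelV_meas (R : realType) m (A : set 'rV[R]_m) :
  open A -> measurable (A : set (borelV R m)).
Proof. by move=> oA; apply: sub_gen_smallest. Qed.

Lemma borelM_meas (R : realType) m (A : set 'M[R]_m) :
  open A -> measurable (A : set (borelM R m)).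
Proof. by move=> oA; apply: sub_gen_smallest. Qed.
Lemma rat_approx (R : realType) a b (p : 'M[R]_(a,b)) (d : R) : 0 < d ->
  exists q : 'M[rat]_(a,b), forall i j, `|p i j - ratr (q i j)| < d.
Proof.
move=> d0.
have : forall ij : 'I_a * 'I_b, exists q : rat, `|p ij.1 ij.2 - ratr q| < d.
  move=> ij.
  have h : p ij.1 ij.2 - d < p ij.1 ij.2 + d.
    by rewrite ltrBlDr -addrA ltrDl addr_gt0.
  have [q] := @rat_in_itvoo R _ _ h.
  by rewrite in_itv /= => hq; exists q; rewrite ltr_distlC.
move/choice => [f Hf]; exists (\matrix_(i,j) f (i,j)) => i j; rewrite mxE.
exact: (Hf (i, j)).
Qed.
Lemma prod_open_meas (R : realType) m (W : set ('rV[R]_m * 'M[R]_m)) :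
  open W -> measurable (W : set (borelV R m * borelM R m)).
Proof.
move=> oW.
pose Bx (t : 'rV[rat]_m * 'M[rat]_m * nat) : set ('rV[R]_m * 'M[R]_m) :=
  ball (map_mx (@ratr R) t.1.1) (t.2.+1%:R^-1) `*`
  ball (map_mx (@ratr R) t.1.2) (t.2.+1%:R^-1).
pose F t := if pselect (Bx t `<=` W) then Bx t else set0.
have -> : W = \bigcup_t F t.
  apply/seteqP; split; last first.
    by move=> z [t _]; rewrite /F; destruct (pselect _) as [sub0|] => //; apply: sub0.
  move=> [p g] Wz.
  have := oW _ Wz => /nbhs_ballP [e e0 He].
  have e20 : 0 < e / 2 by rewrite divr_gt0.
  have [j hj] : exists j : nat, j.+1%:R^-1 < e / 2.
    have := @near_infty_natSinv_lt R (PosNum e20).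
    by case/filter_ex => j hj; exists j.
  have d0 : 0 < j.+1%:R^-1 :> R by rewrite invr_gt0.
  have [q1 hq1] := @rat_approx R _ _ p _ d0.
  have [q2 hq2] := @rat_approx R _ _ g _ d0.
  exists (q1, q2, j) => //.
  have inB : Bx (q1, q2, j) (p, g).
    split => /=; split => // i k; rewrite /ball /= !mxE distrC; [exact: hq1|exact: hq2].
  have hle : j.+1%:R^-1 + j.+1%:R^-1 <= e.
    by rewrite [leRHS](splitr e) lerD // ltW.
  have sub : Bx (q1, q2, j) `<=` W.
    move=> [p' g'] [/= b1 b2]; apply: He; split => /=.
      apply: (le_ball hle); apply: ball_triangle b1; apply: ball_sym; exact: inB.1.
    apply: (le_ball hle); apply: ball_triangle b2; apply: ball_sym; exact: inB.2.
  rewrite /F; destruct (pselect _) as [h|ns] => //=; exact: (ns sub).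
apply: countable_bigcupT_measurable; first exact: countableP.
move=> t; rewrite /F; destruct (pselect _) as [h|h]; last exact: measurable0.
apply: measurableX; apply: sub_gen_smallest; exact: ball_open.
Qed.
Lemma prod_cont_meas (R : realType) m (Phi : 'rV[R]_m * 'M[R]_m -> R) :
  continuous Phi -> measurable_fun setT (Phi : borelV R m * borelM R m -> R).
Proof.
move=> /continuousP cf; apply: (measurability _ (RGenOpens.measurableE R)).
move=> _ [_ [a [b ->] <-]]; rewrite setTI.
apply: prod_open_meas; exact/cf/interval_open.
Qed.

Lemma dot_trmul {R : realType} {m} (a u : 'rV[R]_m) (g : 'M[R]_m) :
  dot (a *m g^T) u = dot a (u *m g).
Proof. by rewrite /dot trmx_mul mulmxA. Qed.

Lemma dot_orth {R : realType} {m} (x y : 'rV[R]_m) {g : 'M[R]_m} :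
  Defs.orthogonal g -> dot (x *m g) (y *m g) = dot x y.
Proof. by move=> hg; rewrite /dot trmx_mul mulmxA -(mulmxA x) hg mulmx1. Qed.

Lemma dotBr {R : realType} {m} (x a b : 'rV[R]_m) (c : R) :
  dot x (a - c *: b) = dot x a - c * dot x b.
Proof. by rewrite /dot linearB linearZ /= mulmxBr -scalemxAr !mxE. Qed.

Lemma dotC {R : realType} {m} (x y : 'rV[R]_m) : dot x y = dot y x.
Proof.
have e : y *m x^T = (x *m y^T)^T by rewrite trmx_mul trmxK.
by rewrite /dot e !mxE.
Qed.

Lemma sphere_orth {R : realType} {m} {r : R} {p : 'rV[R]_m} {g : 'M[R]_m} :
  Defs.orthogonal g -> sphere m r p -> sphere m r (p *m g).
Proof. by move=> hg; rewrite /sphere /= dot_orth. Qed.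

Lemma step1 (R : realType) m (r : R) (hr : r != 0) (v : 'rV[R]_m)
  (mu : probability (borelM R m) R) (X : 'rV[R]_m -> 'rV[R]_m)
  (hXt : forall p, sphere m r p -> tangent p (X p))
  (hXG : G_mean_zero r v mu X) (p : 'rV[R]_m) (hp : sphere m r p) :
  (\int[mu]_(g in (isotropy v : set (borelM R m))) (dot (X (p *m g)) v)%:E
    = 0)%E.
Proof.
pose c := dot v p / r ^+ 2.
have ht : tangent p (v - c *: p).
  rewrite /tangent /= dotC dotBr hp (dotC p v) /c mulfVK ?subrr //.
  by rewrite expf_neq0.
rewrite -(hXG p hp _ ht); apply: eq_integral => g /[!inE] -[hg hvg].
congr EFin; rewrite dot_trmul mulmxBl -scalemxAl hvg dotBr.
by rewrite (hXt _ (sphere_orth hg hp)) mulr0 subr0.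
Qed.
Lemma id_cont {T : topologicalType} : continuous (fun x : T => x).
Proof. by move=> x; exact: cvg_id. Qed.

Lemma dotv_cont (R : realType) m (F : 'rV[R]_m -> 'rV[R]_m) (v : 'rV[R]_m) :
  continuous F -> continuous (fun x => dot (F x) v).
Proof.
move=> cF; apply: (@coord_cont R _ 1 1 (fun x => F x *m v^T) 0 0).
by apply: mulmx_cont => //; exact: cst_continuous.
Qed.

Lemma dotxx_cont (R : realType) m : continuous (fun x : 'rV[R]_m => dot x x).
Proof.
apply: (@coord_cont R _ 1 1 (fun x : 'rV[R]_m => x *m x^T) 0 0).
by apply: mulmx_cont; [exact: id_cont|apply: trmx_cont; exact: id_cont].
Qed.

Lemma sphere_closed (R : realType) m (r : R) : closed (sphere m r).
Proof.
have -> : sphere m r = (fun x => dot x x) @^-1` [set r ^+ 2] by [].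
apply: preimage_closed; last exact: closed_eq.
by move=> x _; exact: dotxx_cont.
Qed.

Lemma sphere_norm (R : realType) m (r : R) (x : 'rV[R]_m) :
  0 < r -> sphere m r x -> `|x| <= r.
Proof.
move=> r0 Sx; change (mx_norm x <= r); rewrite mx_normrE.
apply: bigmax_le; first exact: ltW.
move=> [i j] _ /=; rewrite (ord1 i).
have h : x 0 j * x 0 j <= r * r.
  rewrite -[r * r]expr2 -Sx /dot mxE (bigD1 j) //= mxE -[leLHS]addr0 lerD2l.
  by apply: sumr_ge0 => k _; rewrite mxE -expr2 sqr_ge0.
by rewrite ler_norml; apply/andP; split; nra.
Qed.

Lemma sphere_compact (R : realType) m (r : R) : 0 < r -> compact (sphere m r).
Proof.
move=> r0; apply: bounded_closed_compact; last exact: sphere_closed.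
rewrite /bounded_set /bounded_near.
apply: filterS (nbhs_pinfty_ge (num_real r)) => M hM x Sx.
exact: le_trans (@sphere_norm R m r x r0 Sx) hM.
Qed.

Lemma cont_bounded (R : realType) m (r : R) (f : 'rV[R]_m -> R) :
  0 < r -> continuous f ->
  exists B : R, forall x, sphere m r x -> `|f x| <= B.
Proof.
move=> r0 cf.
have := continuous_compact (@continuous_subspaceT _ _ (sphere m r) f cf) (@sphere_compact R m r r0).
move=> /compact_bounded [M [_ hM]].
exists (M + 1) => x Sx; apply: (hM (M + 1)); first by rewrite ltrDl.
by exists x.
Qed.
Lemma closed_measV (R : realType) m (A : set 'rV[R]_m) :
  closed A -> measurable (A : set (borelV R m)).
Proof.
move=> cA; rewrite -[A]setCK; apply: measurableC; apply: borelV_meas.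
exact: closed_openC.
Qed.

Lemma closed_measM (R : realType) m (A : set 'M[R]_m) :
  closed A -> measurable (A : set (borelM R m)).
Proof.
move=> cA; rewrite -[A]setCK; apply: measurableC; apply: borelM_meas.
exact: closed_openC.
Qed.

Lemma isotropy_closed (R : realType) m (v : 'rV[R]_m) : closed (isotropy v).
Proof.
have -> : isotropy v = (fun g : 'M[R]_m => g *m g^T) @^-1` [set 1%:M] `&`
   (fun g : 'M[R]_m => v *m g) @^-1` [set v] by [].
apply: closedI; apply: preimage_closed.
- move=> x _; apply: mulmx_cont; [exact: id_cont|apply: trmx_cont; exact: id_cont].
- exact/accessible_closed_set1/hausdorff_accessible/norm_hausdorff.
- by move=> x _; apply: mulmx_cont; [exact: cst_continuous|exact: id_cont].
- exact/accessible_closed_set1/hausdorff_accessible/norm_hausdorff.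
Qed.

Lemma psi_meas (R : realType) m (g : 'M[R]_m) :
  measurable_fun setT ((fun x : 'rV[R]_m => x *m g) : borelV R m -> borelV R m).
Proof.
apply: meas_cont_gen; apply: mulmx_cont; [exact: id_cont|exact: cst_continuous].
Qed.

Local Open Scope ereal_scope.

Lemma step2 (R : realType) m (r : R) (r0 : (0 < r)%R)
  (sigma : {finite_measure set (borelV R m) -> \bar R})
  (hsig : forall g : 'M[R]_m, Defs.orthogonal g ->
    forall A : set (borelV R m), measurable A ->
      sigma ((fun x : 'rV[R]_m => x *m g) @^-1` A) = sigma A)
  (f : 'rV[R]_m -> R) (fc : continuous f) (g : 'M[R]_m)
  (hg : Defs.orthogonal g) :
  \int[sigma]_(x in (sphere m r : set (borelV R m))) (f (x *m g))%:E =
  \int[sigma]_(x in (sphere m r : set (borelV R m))) (f x)%:E.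
Proof.
have mS : measurable (sphere m r : set (borelV R m)).
  by apply: closed_measV; exact: sphere_closed.
have [B hB] := @cont_bounded R m r f r0 fc.
have mf : measurable_fun setT (f : borelV R m -> R) by exact: meas_cont.
have eS : (fun x : 'rV[R]_m => x *m g) @^-1` sphere m r = sphere m r.
  by apply/seteqP; split => x /=; rewrite /sphere /= dot_orth.
have mpsi := @psi_meas R m g.
have intf : sigma.-integrable
    ((fun x : 'rV[R]_m => x *m g) @^-1` (sphere m r : set (borelV R m)))
    ((EFin \o f) \o (fun x : 'rV[R]_m => x *m g)).
  rewrite eS; apply: (@measurable_bounded_integrable _ _ _ sigma
     (fun x => f (x *m g))) => //.
  - by have /fin_numPlt/andP[_ ->] := fin_num_measure sigma _ mS.
  - by apply: measurable_funTS; exact: (measurableT_comp mf mpsi).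
  - rewrite /bounded_near; apply: filterS (nbhs_pinfty_ge (num_real B)).
    move=> M hM x Sx; apply: le_trans hM; apply: hB.
    by rewrite /sphere /= dot_orth.
have mEf : measurable_fun setT (EFin \o f : borelV R m -> \bar R).
  exact/measurable_EFinP.
have P := integral_pushforward mpsi mEf intf mS.
rewrite eS in P.
transitivity (\int[sigma]_(x in (sphere m r : set (borelV R m)))
   ((EFin \o f) \o (fun x : 'rV[R]_m => x *m g)) x); first by [].
rewrite -P; apply: eq_measure_integral => A mA _.
exact: (hsig g hg A mA).
Qed.
Local Close Scope ereal_scope.
Theorem lemma3p2 (R : realType) (n : nat) (hn : (2 <= n)%N) (k : R) (hk : 0 < k)
  (v : 'rV[R]_n.+1) (hv : sphere n.+1 k^-1 v)
  (mu : probability (borelM R n.+1) R) (hmu : haar_prob v mu)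
  (sigma : {finite_measure set (borelV R n.+1) -> \bar R})
  (hsigma : sphere_measure k^-1 sigma)
  (X : 'rV[R]_n.+1 -> 'rV[R]_n.+1) (hXs : smooth X)
  (hXt : forall p, sphere n.+1 k^-1 p -> tangent p (X p))
  (hXG : G_mean_zero k^-1 v mu X) :
  (\int[sigma]_(x in (sphere n.+1 k^-1 : set (borelV R n.+1)))
      (dot (X x) v)%:E = 0)%E.
Proof.
have r0 : (0 < k^-1)%R by rewrite invr_gt0.
have cX : continuous X.
  by move=> x; apply: differentiable_continuous; exact: (hXs [::] x).
pose f := fun x => dot (X x) v.
have fc : continuous f := @dotv_cont R n.+1 X v cX.
have [B hB] := @cont_bounded R n.+1 k^-1 f r0 fc.
have mS : measurable (sphere n.+1 k^-1 : set (borelV R n.+1)).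
  by apply: closed_measV; exact: sphere_closed.
have mG : measurable (isotropy v : set (borelM R n.+1)).
  by apply: closed_measM; exact: isotropy_closed.
have muG : mu (isotropy v) = 1%E.
  have := probability_setC mu mG.
  rewrite hmu.1 => h.
  have fG := fin_num_measure mu _ mG.
  rewrite -(fineK fG) -EFinB in h.
  rewrite -(fineK fG); congr EFin.
  have h2 := EFin_inj h. lra.
pose H := fun z : 'rV[R]_n.+1 * 'M[R]_n.+1 =>
  (\1_((sphere n.+1 k^-1) `*` isotropy v) z * f (z.1 *m z.2))%R.
have mSG : measurable ((sphere n.+1 k^-1 : set (borelV R n.+1)) `*`
    (isotropy v : set (borelM R n.+1))) by exact: measurableX.
have mH : measurable_fun setT (H : borelV R n.+1 * borelM R n.+1 -> R).
  apply: measurable_funM; first exact: measurable_indic.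
  apply: prod_cont_meas; apply: (@comp_cont _ _ _ (fun z : 'rV[R]_n.+1 * 'M[R]_n.+1 => z.1 *m z.2) f _ fc).
  by apply: mulmx_cont; [exact: fst_cont|exact: snd_cont].
have HB : forall z, `|H z| <= `|B|.
  move=> [p g]; rewrite /H indicE.
  case: (boolP ((p, g) \in _)) => [|_]; last by rewrite mul0r normr0.
  rewrite in_setX => /andP[/set_mem pS /set_mem [hg _]] /=.
  by rewrite mul1r (le_trans (hB _ (sphere_orth hg pS))) // ler_norm.
have intH : (sigma \x mu)%E.-integrable setT (EFin \o H).
  have pfin : ((sigma \x mu)%E ([set: borelV R n.+1] `*` [set: borelM R n.+1])
       < +oo)%E.
    rewrite product_measure1E //; apply: lte_mul_pinfty.
    - exact: measure_ge0.
    - exact: fin_num_measure.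
    - by have /fin_numPlt/andP[_ ->] := fin_num_measure mu _ measurableT.
  apply: measurable_bounded_integrable => //.
  - by rewrite -setXTT; exact: pfin.
  - rewrite /bounded_near; apply: filterS (nbhs_pinfty_ge (num_real `|B|)).
    by move=> M hM z _; exact: le_trans (HB z) hM.
have FB := Fubini intH.
have hr : k^-1 != 0 by rewrite gt_eqF.
have L : forall x : borelV R n.+1, (\int[mu]_y (EFin \o H) (x, y) = 0)%E.
  move=> x; case: (boolP (x \in (sphere n.+1 k^-1 : set 'rV[R]_n.+1))) => xS.
  - transitivity (\int[mu]_(g in (isotropy v : set (borelM R n.+1)))
        (dot (X (x *m g)) v)%:E)%E; last first.
      exact: (@step1 R n.+1 k^-1 hr v mu X hXt hXG x (set_mem xS)).
    rewrite [RHS]integral_mkcond; apply: eq_integral => y _.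
    rewrite patchE /= /H indicE in_setX xS /=.
    by case: (y \in isotropy v); rewrite ?mul1r ?mul0r.
  - apply: integral0_eq => y _.
    by rewrite /= /H indicE in_setX (negbTE xS) /= mul0r.
pose I := (\int[sigma]_(x in (sphere n.+1 k^-1 : set (borelV R n.+1)))
      (dot (X x) v)%:E)%E.
have Rr : forall y : borelM R n.+1, (\int[sigma]_x (EFin \o H) (x, y) =
    if y \in isotropy v then I else 0)%E.
  move=> y; case: (boolP (y \in (isotropy v : set 'M[R]_n.+1))) => yG.
  - have hg : Defs.orthogonal y by have [] := set_mem yG.
    rewrite /I -(@step2 R n.+1 k^-1 r0 sigma hsigma.2.2 f fc y hg).
    rewrite [RHS]integral_mkcond; apply: eq_integral => x _.
    rewrite patchE /= /H indicE in_setX yG andbT /=.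
    by case: (x \in sphere n.+1 k^-1); rewrite ?mul1r ?mul0r.
  - apply: integral0_eq => x _.
    by rewrite /= /H indicE in_setX (negbTE yG) andbF /= mul0r.
have E1 : (\int[sigma]_x \int[mu]_y (EFin \o H) (x, y) = 0)%E.
  under eq_integral => x _ do rewrite L.
  exact: integral0.
have E2 : (\int[mu]_y \int[sigma]_x (EFin \o H) (x, y) = I)%E.
  under eq_integral => y _ do rewrite Rr.
  rewrite -[RHS]mule1 -muG -integral_cst // [RHS]integral_mkcond.
  by apply: eq_integral => y _; rewrite patchE.
change (I = 0%E); by rewrite -E2 -FB E1.
Qed.
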